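(* Let $L$ be an interval locale and $f:E\to F$ a morphism of sheaves of monomorphisms on $L_{+}$. If $f$ is a stalkwise epimorphism (respectively stalkwise monomorphism, stalkwise isomorphism), then $f$ is an epimorphism (respectively monomorphism, isomorphism) of sheaves on $L_{+}$.
   Context: A locale $L$ is a complete lattice in which finite meets distribute over arbitrary joins, with Grothendieck topology: $\{b_j\le a\}$ covers $a$ iff $\bigvee_j b_j=a$. $L$ is an interval if it is totally ordered and densely ordered. $1$ is the top element and $i$ the bottom element of $L$; $L_{+}=L\sqcup\{0\}$ with a new bottom $0<i$. A sheaf of monomorphisms on $L_{+}$ is a sheaf $F$ with $F(b)\to F(a)$ injective for all $a\le b$ in $L$. For a sheaf $F$ on $L_{+}$ and $x\in L_{+}\setminus\{1\}$, the stalk is $F_x=\varinjlim_{s\in L_{+},\,x<s}F(s)$ (so $F_0\cong F(i)$). A map $E\to F$ is a stalkwise epimorphism (monomorphism, isomorphism) if $E_x\to F_x$ is surjective (injective, bijective) for all $x\in L_{+}\setminus\{1\}$. *)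

(* Defs.v *)
Set Implicit Arguments.
Unset Strict Implicit.

Record Locale := {
  lcar :> Type;
  le : lcar -> lcar -> Prop;
  le_refl : forall a, le a a;
  le_trans : forall a b c, le a b -> le b c -> le a c;
  le_antisym : forall a b, le a b -> le b a -> a = b;
  join : (lcar -> Prop) -> lcar;
  join_ub : forall (S : lcar -> Prop) a, S a -> le a (join S);
  join_least : forall (S : lcar -> Prop) b, (forall a, S a -> le a b) -> le (join S) b;
  meet : lcar -> lcar -> lcar;
  meet_lb1 : forall a b, le (meet a b) a;
  meet_lb2 : forall a b, le (meet a b) b;
  meet_greatest : forall a b c, le c a -> le c b -> le c (meet a b);
  meet_join_distr : forall a (S : lcar -> Prop),
      meet a (join S) = join (fun c => exists b, S b /\ c = meet a b)
}.
Arguments le {L} a b : rename.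
Arguments join {L} S : rename.
Arguments meet {L} a b : rename.

Definition lt {L : Locale} (a b : L) : Prop := le a b /\ a <> b.

Definition ltop (L : Locale) : L := join (fun _ => True).
Definition lbot (L : Locale) : L := join (fun _ => False).

Definition is_interval (L : Locale) : Prop :=
  (forall a b : L, le a b \/ le b a) /\
  (forall a b : L, lt a b -> exists c : L, lt a c /\ lt c b).

(** * L_+ = L with a new bottom 0 (represented by None) *)
Definition Lplus (L : Locale) : Type := option L.

Definition lep {L : Locale} (a b : Lplus L) : Prop :=
  match a, b with
  | None, _ => True
  | Some _, None => False
  | Some a', Some b' => le a' b'
  end.

Definition ltp {L : Locale} (a b : Lplus L) : Prop := lep a b /\ a <> b.

Record Presheaf (L : Locale) := {
  sec :> Lplus L -> Type;
  res : forall a b : Lplus L, lep a b -> sec b -> sec a;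
  res_id : forall a (h : lep a a) x, res h x = x;
  res_comp : forall a b c (hab : lep a b) (hbc : lep b c) (hac : lep a c) x,
      res hab (res hbc x) = res hac x
}.
Arguments res {L} p {a b} _ _ : rename.

(** Sheaf condition for the Grothendieck topology of the locale L_+:
    a family (b_j <= a)_j covers a iff a is the join (least upper bound)
    of the b_j in L_+.  Matching families are stated sieve-wise: the
    sections agree after restriction to every common lower bound. *)
Definition is_sheaf {L : Locale} (P : Presheaf L) : Prop :=
  forall (a : Lplus L) (J : Type) (b : J -> Lplus L) (hb : forall j, lep (b j) a),
    (forall u : Lplus L, (forall j, lep (b j) u) -> lep a u) ->
    forall s : forall j, P (b j),
      (forall j k (c : Lplus L) (hj : lep c (b j)) (hk : lep c (b k)),
          res P hj (s j) = res P hk (s k)) ->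
      exists t : P a,
        (forall j, res P (hb j) t = s j) /\
        (forall t' : P a, (forall j, res P (hb j) t' = s j) -> t' = t).

Record Sheaf (L : Locale) := {
  sh :> Presheaf L;
  sh_cond : is_sheaf sh
}.

Definition sheaf_of_monos {L : Locale} (F : Sheaf L) : Prop :=
  forall (a b : L) (h : lep (Some a) (Some b)) (x y : F (Some b)),
    res F h x = res F h y -> x = y.

Unset Implicit Arguments.
Record Hom {L : Locale} (E F : Presheaf L) := {
  hcomp :> forall a : Lplus L, E a -> F a;
  hnat : forall a b (h : lep a b) (x : E b),
      hcomp a (@res L E a b h x) = @res L F a b h (hcomp b x)
}.

Set Implicit Arguments.
Arguments hcomp {L E F} _ _ _.

Definition hom_eq {L : Locale} {E F : Presheaf L} (g h : Hom E F) : Prop :=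
  forall a x, g a x = h a x.

Definition is_epi {L : Locale} {E F : Sheaf L} (f : Hom E F) : Prop :=
  forall (G : Sheaf L) (g h : Hom F G),
    (forall a x, g a (f a x) = h a (f a x)) -> hom_eq g h.

Definition is_mono {L : Locale} {E F : Sheaf L} (f : Hom E F) : Prop :=
  forall (G : Sheaf L) (g h : Hom G E),
    (forall a x, f a (g a x) = f a (h a x)) -> hom_eq g h.

Definition is_iso {L : Locale} {E F : Sheaf L} (f : Hom E F) : Prop :=
  exists g : Hom F E,
    (forall a x, g a (f a x) = x) /\ (forall a y, f a (g a y) = y).

(** * Stalks F_x = colim_{x < s} F(s), as germs modulo the filtered-colimit
    equivalence (two representatives are identified iff they agree after
    restriction to some t with x < t below both). *)
Definition germ {L : Locale} (P : Presheaf L) (x : Lplus L) : Type :=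
  { s : Lplus L & (ltp x s * P s)%type }.

Definition germ_eq {L : Locale} (P : Presheaf L) (x : Lplus L) (g1 g2 : germ P x) : Prop :=
  match g1, g2 with
  | existT _ s1 (_, v1), existT _ s2 (_, v2) =>
      exists (t : Lplus L) (ht : ltp x t) (h1 : lep t s1) (h2 : lep t s2),
        res P h1 v1 = res P h2 v2
  end.

Definition germ_map {L : Locale} {E F : Presheaf L} (f : Hom E F) (x : Lplus L)
  (g : germ E x) : germ F x :=
  match g with
  | existT _ s (hs, v) => existT _ s (hs, f s v)
  end.

Definition stalkwise_epi {L : Locale} {E F : Presheaf L} (f : Hom E F) : Prop :=
  forall x : Lplus L, x <> Some (ltop L) ->
    forall g : germ F x, exists g' : germ E x, germ_eq (germ_map f g') g.

Definition stalkwise_mono {L : Locale} {E F : Presheaf L} (f : Hom E F) : Prop :=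
  forall x : Lplus L, x <> Some (ltop L) ->
    forall g1 g2 : germ E x,
      germ_eq (germ_map f g1) (germ_map f g2) -> germ_eq g1 g2.

Definition stalkwise_iso {L : Locale} {E F : Presheaf L} (f : Hom E F) : Prop :=
  stalkwise_epi f /\ stalkwise_mono f.

(* Main.v *)
Require Import Defs.
From Stdlib Require Import ClassicalEpsilon.

Section Aux.
Variable L : Locale.

Lemma lep_refl (a : Lplus L) : lep a a.
Proof. destruct a; simpl; auto. apply le_refl. Qed.

Lemma lep_trans (a b c : Lplus L) : lep a b -> lep b c -> lep a c.
Proof. destruct a, b, c; simpl; try tauto. apply le_trans. Qed.

Lemma lep_antisym (a b : Lplus L) : lep a b -> lep b a -> a = b.
Proof. destruct a, b; simpl; try tauto. intros; f_equal; apply le_antisym; auto. Qed.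

Lemma lep_total (HL : is_interval L) (a b : Lplus L) : lep a b \/ lep b a.
Proof. destruct a, b; simpl; auto. apply (proj1 HL). Qed.

Lemma res_pi (P : Presheaf L) a b (h1 h2 : lep a b) x : res P h1 x = res P h2 x.
Proof.
  rewrite <- (@res_id L P b (lep_refl b) x) at 1.
  apply res_comp.
Qed.

Lemma res_match (P : Presheaf L) a (y : P a) c b1 b2 (h1 : lep b1 a) (h2 : lep b2 a)
  (k1 : lep c b1) (k2 : lep c b2) : res P k1 (res P h1 y) = res P k2 (res P h2 y).
Proof.
  rewrite (@res_comp L P _ _ _ k1 h1 (lep_trans _ _ _ k1 h1) y), (@res_comp L P _ _ _ k2 h2 (lep_trans _ _ _ k1 h1) y).
  reflexivity.
Qed.

Lemma cover (HL : is_interval L) (a : Lplus L) (J : Type) (b : J -> Lplus L) :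
  (forall x, ltp x a -> exists j, ltp x (b j) /\ lep (b j) a) ->
  forall u, (forall j, lep (b j) u) -> lep a u.
Proof.
  intros H u Hu.
  destruct (lep_total HL a u) as [h|h]; auto.
  destruct (classic (u = a)) as [e|ne].
  - subst; apply lep_refl.
  - destruct (H u (conj h ne)) as [j [[h1 h2] _]].
    exfalso; apply h2. apply lep_antisym; auto.
Qed.

Lemma not_top (a x : Lplus L) : ltp x a -> x <> Some (ltop L).
Proof.
  intros [h ne] ->. destruct a as [a|]; simpl in h; [|exact h].
  apply ne; f_equal. apply le_antisym; auto. apply join_ub. exact I.
Qed.
End Aux.
Arguments not_top {L a x}.
Arguments cover {L} HL {a J b}.
Arguments res_pi {L} P {a b} h1 h2 x.
Arguments lep_trans {L a b c}.
Arguments lep_refl {L} a.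

Section Main.
Variables (L : Locale) (HL : is_interval L) (E F : Sheaf L) (f : Hom E F).

Lemma inj_of_smono : stalkwise_mono f -> forall a (e1 e2 : E a), f a e1 = f a e2 -> e1 = e2.
Proof.
  intros Hm a e1 e2 Heq.
  set (J := {t : Lplus L & {h : lep t a | res E h e1 = res E h e2}}).
  set (b := fun j : J => projT1 j).
  set (hb := fun j : J => proj1_sig (projT2 j)).
  assert (Hc : forall u, (forall j, lep (b j) u) -> lep a u).
  { apply cover; auto. intros x hx.
    destruct (Hm x (not_top hx) (existT _ a (hx, e1)) (existT _ a (hx, e2))) as
      [t [ht [h1 [h2 He]]]].
    + simpl. exists a, hx, (lep_refl a), (lep_refl a). now rewrite Heq.
    + rewrite (res_pi _ h2 h1) in He.
      exists (existT _ t (exist _ h1 He)). simpl; auto. }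
  destruct (@sh_cond L E a J b hb Hc (fun j => res E (hb j) e1))
    as [t [_ Hu]].
  - intros j k c hj hk. apply res_match.
  - rewrite (Hu e1 (fun j => eq_refl)). symmetry; apply Hu.
    intros j. unfold hb. destruct j as [t0 [h e]]. simpl. auto.
Qed.

Lemma loc_surj (He : stalkwise_epi f) a (y : F a) (x : Lplus L) : ltp x a ->
  exists j : {t : Lplus L & {h : lep t a & {e : E t | f t e = res F h y}}},
    ltp x (projT1 j) /\ lep (projT1 j) a.
Proof.
  intros hx.
  destruct (He x (not_top hx) (existT _ a (hx, y))) as [[s' [hs' e']] Hg].
  simpl in Hg. destruct Hg as [t [ht [h1 [h2 Hr]]]].
  assert (Hf : f t (res E h1 e') = res F h2 y) by (rewrite hnat; auto).
  exists (existT _ t (existT _ h2 (exist _ _ Hf))). simpl; auto.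
Qed.

Lemma surj_of (He : stalkwise_epi f) (Hm : stalkwise_mono f) a (y : F a) :
  exists e, f a e = y.
Proof.
  set (J := {t : Lplus L & {h : lep t a & {e : E t | f t e = res F h y}}}).
  set (b := fun j : J => projT1 j).
  set (hb := fun j : J => projT1 (projT2 j)).
  set (s := fun j : J => proj1_sig (projT2 (projT2 j))).
  assert (Hs : forall j, f (b j) (s j) = res F (hb j) y)
    by (intros j; exact (proj2_sig (projT2 (projT2 j)))).
  assert (Hc : forall u, (forall j, lep (b j) u) -> lep a u)
    by (apply cover; auto; intros; apply loc_surj; auto).
  destruct (@sh_cond L E a J b hb Hc s) as [t [Ht _]].
  - intros j k c hj hk. apply (inj_of_smono Hm). rewrite !hnat, !Hs.
    apply res_match.
  - exists t.
    destruct (@sh_cond L F a J b hb Hc (fun j => res F (hb j) y)) as [t0 [_ Hu]].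
    + intros j k c hj hk. apply res_match.
    + rewrite (Hu y (fun j => eq_refl)). apply Hu.
      intros j. rewrite <- hnat, Ht. apply Hs.
Qed.

End Main.

Theorem lemma32 (L : Locale) (HL : is_interval L) (E F : Sheaf L)
  (HE : sheaf_of_monos E) (HF : sheaf_of_monos F) (f : Hom E F) :
  (stalkwise_epi f -> is_epi f) /\
  (stalkwise_mono f -> is_mono f) /\
  (stalkwise_iso f -> is_iso f).
Proof.
  split; [|split].
  - intros Hep G g h Hgh a y.
    set (J := {t : Lplus L & {h : lep t a & {e : E t | f t e = res F h y}}}).
    set (b := fun j : J => projT1 j).
    set (hb := fun j : J => projT1 (projT2 j)).
    assert (Hs : forall j, f (b j) (proj1_sig (projT2 (projT2 j))) = res F (hb j) y)
      by (intros j; exact (proj2_sig (projT2 (projT2 j)))).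
    assert (Hc : forall u, (forall j, lep (b j) u) -> lep a u)
      by (apply cover; auto; intros; apply loc_surj; auto).
    destruct (@sh_cond L G a J b hb Hc (fun j => res G (hb j) (g a y))) as [t0 [_ Hu]].
    + intros j k c hj hk. apply res_match.
    + rewrite (Hu (g a y) (fun j => eq_refl)). symmetry; apply Hu.
      intros j. rewrite <- !hnat. pose proof (Hgh (b j) (proj1_sig (projT2 (projT2 j)))) as Hj. rewrite (Hs j) in Hj. symmetry. exact Hj.
  - intros Hm G g h Hgh a x. apply (@inj_of_smono L HL E F f Hm). auto.
  - intros [Hep Hm].
    set (gi := fun a y => proj1_sig (constructive_indefinite_description _
                                       (@surj_of L HL E F f Hep Hm a y))).
    assert (Hgi : forall a y, f a (gi a y) = y)
      by (intros; unfold gi; apply proj2_sig).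
    unshelve eexists {| hcomp := gi |}.
    + intros a b h x. apply (@inj_of_smono L HL E F f Hm). rewrite hnat, !Hgi. auto.
    + simpl. split; auto. intros a x. apply (@inj_of_smono L HL E F f Hm). auto.
Qed.
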